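(* Let $\mathfrak{C}$ be a class of groups closed under taking subgroups and finite direct products. If the groups $G$ and $H$ are locally $\mathfrak{C}$ up to powers, then $G\times H$ is locally $\mathfrak{C}$ up to powers.
   Context: A group $\Gamma$ is locally $\mathfrak{C}$ up to powers if for every finite list $\gamma_1,\dots,\gamma_k\in\Gamma$ there are exponents $t_1,\dots,t_k\in\mathbb{N}$ such that $\langle\gamma_1^{t_1},\dots,\gamma_k^{t_k}\rangle$ belongs to $\mathfrak{C}$. *)

(* Defs.v *)
From Stdlib Require Import ProofIrrelevance.

Record grp : Type := Grp {
  carrier :> Type;
  gmul : carrier -> carrier -> carrier;
  gone : carrier;
  ginv : carrier -> carrier;
  gmulA : forall x y z, gmul x (gmul y z) = gmul (gmul x y) z;
  gmul1l : forall x, gmul gone x = x;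
  gmul1r : forall x, gmul x gone = x;
  gmulVl : forall x, gmul (ginv x) x = gone;
  gmulVr : forall x, gmul x (ginv x) = gone
}.

Arguments gmul {g} _ _.
Arguments gone {g}.
Arguments ginv {g} _.

Fixpoint gpow (G : grp) (x : G) (n : nat) : G :=
  match n with
  | O => gone
  | S m => gmul x (gpow G x m)
  end.

Definition is_subgroup (G : grp) (S : G -> Prop) : Prop :=
  S gone /\ (forall x y, S x -> S y -> S (gmul x y)) /\ (forall x, S x -> S (ginv x)).

Section Sub.
Variables (G : grp) (S : G -> Prop) (HS : is_subgroup G S).

Definition sub_mul (x y : {x : G | S x}) : {x : G | S x} :=
  exist _ (gmul (proj1_sig x) (proj1_sig y))
    (proj1 (proj2 HS) _ _ (proj2_sig x) (proj2_sig y)).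
Definition sub_one : {x : G | S x} := exist _ gone (proj1 HS).
Definition sub_inv (x : {x : G | S x}) : {x : G | S x} :=
  exist _ (ginv (proj1_sig x)) (proj2 (proj2 HS) _ (proj2_sig x)).

Lemma sub_eq (x y : {x : G | S x}) : proj1_sig x = proj1_sig y -> x = y.
Proof. destruct x, y; simpl; intros ->; f_equal; apply proof_irrelevance. Qed.

Definition subgrp : grp.
Proof.
  refine (@Grp {x : G | S x} sub_mul sub_one sub_inv _ _ _ _ _);
  intros; apply sub_eq; simpl.
  - apply gmulA. - apply gmul1l. - apply gmul1r. - apply gmulVl. - apply gmulVr.
Defined.
End Sub.

Definition gen (G : grp) (A : G -> Prop) : G -> Prop :=
  fun x => forall P : G -> Prop, is_subgroup G P -> (forall y, A y -> P y) -> P x.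

Lemma gen_subgroup (G : grp) (A : G -> Prop) : is_subgroup G (gen G A).
Proof.
  split; [|split].
  - intros P HP _; apply HP.
  - intros x y Hx Hy P HP HA; apply HP; [apply Hx|apply Hy]; assumption.
  - intros x Hx P HP HA; apply HP; apply Hx; assumption.
Qed.

Definition gen_grp (G : grp) (A : G -> Prop) : grp := subgrp G (gen G A) (gen_subgroup G A).

Definition prodgrp (G H : grp) : grp.
Proof.
  refine (@Grp (G * H)%type
    (fun x y => (gmul (fst x) (fst y), gmul (snd x) (snd y)))
    (gone, gone) (fun x => (ginv (fst x), ginv (snd x))) _ _ _ _ _);
  intros; simpl;
  [rewrite !gmulA | rewrite !gmul1l | rewrite !gmul1r | rewrite !gmulVl | rewrite !gmulVr];
  try reflexivity; destruct x; reflexivity.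
Defined.

Definition isomorphic (G H : grp) : Prop :=
  exists (f : G -> H) (g : H -> G),
    (forall x, g (f x) = x) /\ (forall y, f (g y) = y) /\
    (forall x y, f (gmul x y) = gmul (f x) (f y)).

Definition iso_closed (C : grp -> Prop) : Prop :=
  forall G H, isomorphic G H -> C G -> C H.
Definition subgroup_closed (C : grp -> Prop) : Prop :=
  forall (G : grp) (S : G -> Prop) (HS : is_subgroup G S), C G -> C (subgrp G S HS).
(* finite direct products: the empty product (trivial group) and binary products;
   by induction this gives all finite direct products *)
Definition trivgrp : grp.
Proof.
  refine (@Grp unit (fun _ _ => tt) tt (fun _ => tt) _ _ _ _ _);
  intros; repeat match goal with u : unit |- _ => destruct u end; reflexivity.
Defined.
Definition fin_prod_closed (C : grp -> Prop) : Prop :=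
  C trivgrp /\ forall G H, C G -> C H -> C (prodgrp G H).

(* G is locally C up to powers: for every finite list g_0..g_{k-1} there are
   exponents t_i in N = {1,2,...} with <g_0^{t_0},...,g_{k-1}^{t_{k-1}}> in C *)
Definition locally_up_to_powers (C : grp -> Prop) (G : grp) : Prop :=
  forall (k : nat) (g : nat -> G),
    exists t : nat -> nat,
      (forall i, i < k -> 0 < t i) /\
      C (gen_grp G (fun x => exists i, i < k /\ x = gpow G (g i) (t i))).

(* Main.v *)
Require Import Defs.
From Stdlib Require Import ProofIrrelevance Lia PeanoNat.

Lemma gpow_add (G : grp) (x : G) a b : gpow G x (a + b) = gmul (gpow G x a) (gpow G x b).
Proof. induction a; simpl. - now rewrite gmul1l. - now rewrite IHa, gmulA. Qed.

Lemma gen_in (G : grp) (A : G -> Prop) y : A y -> gen G A y.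
Proof. intros Hy P _ HA; auto. Qed.

Lemma gen_pow (G : grp) (A : G -> Prop) x t n :
  gen G A (gpow G x t) -> gen G A (gpow G x (t * n)).
Proof.
  intros Ht. rewrite Nat.mul_comm. induction n; simpl.
  - apply (gen_subgroup G A).
  - rewrite gpow_add. apply (gen_subgroup G A); auto.
Qed.

Lemma gpow_prod (G H : grp) (x : prodgrp G H) n :
  gpow (prodgrp G H) x n = (gpow G (fst x) n, gpow H (snd x) n).
Proof. induction n; simpl; [reflexivity| rewrite IHn; reflexivity]. Qed.

Theorem lemma3p3 (C : grp -> Prop)
  (Hiso : iso_closed C) (Hsub : subgroup_closed C) (Hprod : fin_prod_closed C)
  (G H : grp) :
  locally_up_to_powers C G -> locally_up_to_powers C H ->
  locally_up_to_powers C (prodgrp G H).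
Proof.
  intros HG HH k g.
  destruct (HG k (fun i => fst (g i))) as [t1 [Ht1 C1]].
  destruct (HH k (fun i => snd (g i))) as [t2 [Ht2 C2]].
  exists (fun i => t1 i * t2 i). split.
  { intros i Hi. specialize (Ht1 i Hi); specialize (Ht2 i Hi). nia. }
  set (A1 := fun x : G => exists i, i < k /\ x = gpow G (fst (g i)) (t1 i)) in *.
  set (A2 := fun x : H => exists i, i < k /\ x = gpow H (snd (g i)) (t2 i)) in *.
  set (X := fun x : prodgrp G H => exists i, i < k /\ x = gpow (prodgrp G H) (g i) (t1 i * t2 i)).
  assert (Hproj : forall x, gen (prodgrp G H) X x -> gen G A1 (fst x) /\ gen H A2 (snd x)).
  { intros x Hx. apply Hx.
    - split; [|split].
      + split; apply gen_subgroup.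
      + intros a b [Ha1 Ha2] [Hb1 Hb2]; split; simpl; apply gen_subgroup; auto.
      + intros a [Ha1 Ha2]; split; simpl; apply gen_subgroup; auto.
    - intros y [i [Hi ->]]. rewrite gpow_prod; simpl. split.
      + apply gen_pow, gen_in. exists i; auto.
      + rewrite Nat.mul_comm. apply gen_pow, gen_in. exists i; auto. }
  set (P := prodgrp (gen_grp G A1) (gen_grp H A2)).
  set (S := fun p : P => gen (prodgrp G H) X (proj1_sig (fst p), proj1_sig (snd p))).
  assert (HS : is_subgroup P S).
  { split; [|split].
    - apply (gen_subgroup (prodgrp G H) X).
    - intros [a b] [c d] Hx Hy. apply (proj1 (proj2 (gen_subgroup (prodgrp G H) X)) _ _ Hx Hy).
    - intros [a b] Hx. apply (proj2 (proj2 (gen_subgroup (prodgrp G H) X)) _ Hx). }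
  apply (Hiso (subgrp P S HS)).
  2:{ apply Hsub. apply Hprod; assumption. }
  unshelve eexists.
  { intros [[a b] pf]. exact (exist _ (proj1_sig a, proj1_sig b) pf). }
  unshelve eexists.
  { intros [x pf]. refine (exist _ (exist _ (fst x) (proj1 (Hproj x pf)),
                                    exist _ (snd x) (proj2 (Hproj x pf))) _).
    destruct x; exact pf. }
  split; [|split].
  - intros [[[a pa] [b pb]] pf]. simpl.
    match goal with |- exist _ (exist _ _ ?p1, exist _ _ ?p2) _ = _ =>
      rewrite (proof_irrelevance _ p1 pa), (proof_irrelevance _ p2 pb) end; reflexivity.
  - intros [[a b] pf]. reflexivity.
  - intros [[a b] pf] [[c d] pf']. apply (sub_eq (prodgrp G H)); reflexivity.
Qed.
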